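(* Let $0<\alpha_1\le\dots\le\alpha_r$ and $\Lambda=\Lambda(\alpha_1,\dots,\alpha_r)$. Then: (1) $w(\Lambda)=\alpha_r$; (2) $\Lambda$ equals the downwards closure of the convex hull of all coordinate permutations of the vector $(\alpha_1,\dots,\alpha_r)$; (3) for every $j\in[r]$, the slice $\{\mathbf x_{-j}:\mathbf x\in\Lambda,\ x_j=\alpha_r\}$ equals $\Lambda(\alpha_1,\dots,\alpha_{r-1})$; (4) for every $j\in[r]$, the projection $\Lambda_{[r]\setminus\{j\}}=\{\mathbf x_{-j}:\mathbf x\in\Lambda\}$ equals $\Lambda(\alpha_2,\dots,\alpha_r)$; (5) $\delta_{qk}(q\cdot\Lambda)=q^r\delta_k(\Lambda)$ for all $q,k>0$.
   Context: SIM-body: $\Lambda(\alpha_1,\dots,\alpha_r)=\{\mathbf x\in\mathbb R_+^r:\sum_{j\in J}x_j\le\sum_{j=r-|J|+1}^r\alpha_j\ \forall J\subseteq[r]\}$ (with $\Lambda()$ of the empty sequence being the single point of $\mathbb R^0$), and $q\cdot\Lambda(\alpha_1,\dots,\alpha_r)=\Lambda(q\alpha_1,\dots,q\alpha_r)$. The downwards closure of $S\subseteq\mathbb R_+^r$ is $\{\mathbf x\in\mathbb R_+^r:\exists\mathbf y\in S,\ \mathbf x\le\mathbf y\}$. The width of a symmetric body is the length of its projection onto any coordinate axis. For $k>0$ and an $r$-dimensional body $A$, $\delta_k(A)=|A|-k\sum_{j=1}^r|A_{[r]\setminus\{j\}}|$ with $|\cdot|$ Lebesgue measure of the relevant dimension.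 *)

(* Defs.v *)
From HB Require Import structures.
From mathcomp Require Import all_boot all_order all_algebra all_fingroup.
From mathcomp Require Import all_classical all_reals all_analysis.
Set Implicit Arguments. Unset Strict Implicit. Unset Printing Implicit Defensive.
Import Order.TTheory GRing.Theory Num.Theory.
Local Open Scope classical_set_scope.
Local Open Scope ring_scope.

Section SIMDefs.
Variable R : realType.

(* Points of R^r are functions 'I_r -> R (coordinates indexed 0..r-1). *)

(* SIM-body Lambda(a_1,...,a_r): x >= 0 and for every J, sum_{j in J} x_j is
   at most the sum of the |J| largest-indexed a's, i.e. a_{r-|J|+1}+...+a_r
   (0-indexed: indices i with r - |J| <= i). *)
Definition SIM (r : nat) (a : 'I_r -> R) : set ('I_r -> R) :=
  [set x | (forall i, 0 <= x i) /\
           forall J : {set 'I_r},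
             \sum_(j in J) x j <= \sum_(i < r | (r - #|J| <= i)%N) a i].

Definition scale_set (r : nat) (q : R) (A : set ('I_r -> R)) : set ('I_r -> R) :=
  [set (fun i => q * x i) | x in A].

Definition drop_coord (n : nat) (j : 'I_n.+1) (x : 'I_n.+1 -> R) : 'I_n -> R :=
  fun i => x (lift j i).

Definition proj_out (n : nat) (j : 'I_n.+1) (A : set ('I_n.+1 -> R)) :
  set ('I_n -> R) := [set drop_coord j x | x in A].

Definition conv_hull (r : nat) (S : set ('I_r -> R)) : set ('I_r -> R) :=
  [set x | exists (m : nat) (w : 'I_m -> R) (p : 'I_m -> 'I_r -> R),
     [/\ (forall k, 0 <= w k), \sum_(k < m) w k = 1, (forall k, S (p k)) &
         forall i, x i = \sum_(k < m) w k * p k i]].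

Definition down_closure (r : nat) (S : set ('I_r -> R)) : set ('I_r -> R) :=
  [set x | (forall i, 0 <= x i) /\ exists2 y, S y & forall i, x i <= y i].

Definition width_along (r : nat) (j : 'I_r) (A : set ('I_r -> R)) : \bar R :=
  (@lebesgue_measure R) [set x j | x in A].

Definition cons_coord (n : nat) (t : R) (y : 'I_n -> R) : 'I_n.+1 -> R :=
  fun i => match unlift ord0 i with None => t | Some k => y k end.

(* r-dimensional Lebesgue volume, computed by iterated Lebesgue integrals
   (Cavalieri / Fubini-Tonelli); in dimension 0 it is the counting measure
   on the one-point space R^0. *)
Fixpoint volume (r : nat) : set ('I_r -> R) -> \bar R :=
  match r return set ('I_r -> R) -> \bar R with
  | 0 => fun A => if `[< A !=set0 >] then 1%E else 0%E
  | n.+1 => fun A =>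
      (\int[@lebesgue_measure R]_(t in [set: R])
          volume (fun y : 'I_n -> R => A (cons_coord t y)))%E
  end.

Definition delta (n : nat) (k : R) (A : set ('I_n.+1 -> R)) : \bar R :=
  (volume A - k%:E * \sum_(j < n.+1) volume (proj_out j A))%E.

End SIMDefs.

(* Main.v *)
Require Import Defs.
From HB Require Import structures.
From mathcomp Require Import all_boot all_order all_algebra all_fingroup.
From mathcomp Require Import all_classical all_reals all_analysis.
From mathcomp Require Import zify ring lra measurable_realfun.
Set Implicit Arguments. Unset Strict Implicit. Unset Printing Implicit Defensive.
Import Order.TTheory GRing.Theory Num.Theory.
Import numFieldNormedType.Exports.
Local Open Scope classical_set_scope.
Local Open Scope ring_scope.

Section Comb.
Variable R : realType.
Lemma card_top r s : (s <= r)%N -> #|[set i : 'I_r | (r - s <= i)%N]%SET| = s.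
Proof.
move=> sr; rewrite -sum1_card.
rewrite (eq_bigl (fun i : 'I_r => xpredT i && (r - s <= i)%N)); last by move=> i; rewrite inE.
rewrite -(@big_geq_mkord _ 0%N addn (r - s) r xpredT (fun _ => 1%N)) sum_nat_const_nat muln1; lia.
Qed.

Lemma sum_le_card r (f : 'I_r -> R) (A B : {set 'I_r}) :
  #|A| = #|B| -> (forall i t, i \in A -> t \in B -> f i <= f t) ->
  \sum_(i in A) f i <= \sum_(i in B) f i.
Proof.
move=> cAB fle.
case: (posnP #|A|) => [A0|Apos].
  have B0 : #|B| = 0%N by rewrite -cAB.
  move/eqP: A0; rewrite cards_eq0 => /eqP ->.
  move/eqP: B0; rewrite cards_eq0 => /eqP ->.
  by rewrite !big_set0.
have kpos : (0 < (#|A|)%:R :> R) by rewrite ltr0n.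
rewrite -(ler_pM2l kpos).
have -> : #|A|%:R * \sum_(i in A) f i = \sum_(i in A) \sum_(t in B) f i.
  rewrite mulr_sumr; apply: eq_bigr => i _.
  by rewrite sumr_const cAB mulr_natl.
have -> : #|A|%:R * \sum_(t in B) f t = \sum_(i in A) \sum_(t in B) f t.
  by rewrite sumr_const mulr_natl.
apply: ler_sum => i iA; apply: ler_sum => t tB; exact: fle.
Qed.


Lemma topsum r (a : 'I_r -> R) (mono : forall i j : 'I_r, (i <= j)%N -> a i <= a j)
  (S : {set 'I_r}) :
  \sum_(i in S) a i <= \sum_(i < r | (r - #|S| <= i)%N) a i.
Proof.
set T := [set i : 'I_r | (r - #|S| <= i)%N]%SET.
have cT : #|T| = #|S|.
  by apply: card_top; rewrite (leq_trans (max_card _)) ?card_ord.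
have -> : \sum_(i < r | (r - #|S| <= i)%N) a i = \sum_(i in T) a i.
  by apply: eq_bigl => i; rewrite inE.
rewrite (big_setID T) [X in _ <= X](big_setID S) /= finset.setIC lerD2l.
apply: sum_le_card.
  by rewrite !cardsD cT finset.setIC.
move=> i t; rewrite !inE => /andP[iT _] /andP[_ tT]; apply: mono.
move: iT; rewrite -ltnNge => iT; exact: ltnW (leq_trans iT tT).
Qed.


Lemma conv_fin r (S : set ('I_r -> R)) (I : finType) (w : I -> R)
  (p : I -> 'I_r -> R) (x : 'I_r -> R) :
  (forall k, 0 <= w k) -> \sum_k w k = 1 -> (forall k, S (p k)) ->
  (forall i, x i = \sum_k w k * p k i) -> conv_hull S x.
Proof.
move=> w0 w1 Sp xE.
exists #|I|, (fun k => w (enum_val k)), (fun k => p (enum_val k)); split.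
- by move=> k; apply: w0.
- by rewrite -(big_enum_val (A := I)) /=.
- by move=> k; apply: Sp.
- by move=> i; rewrite xE (big_enum_val (A := I)).
Qed.

Lemma pull_lift n (M : 'I_n.+1) (U : {set 'I_n.+1}) (F : 'I_n.+1 -> R) :
  M \notin U ->
  #|[set i | lift M i \in U]%SET| = #|U| /\
  \sum_(i in [set i | lift M i \in U]%SET) F (lift M i) = \sum_(t in U) F t.
Proof.
move=> MU.
have UE : U = lift M @: [set i | lift M i \in U]%SET.
  apply/setP => t; case: (unliftP M t) => [t'|] ->.
    by rewrite mem_imset ?inE //; exact: lift_inj.
  rewrite (negbTE MU); apply/esym/negP => /imsetP [i _ /eqP].
  by rewrite (negbTE (neq_lift _ _)).
split; first by rewrite [in RHS]UE card_imset //; exact: lift_inj.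
by rewrite [in RHS]UE big_imset //; move=> i1 i2 _ _; exact: lift_inj.
Qed.

Definition domb r (a x : 'I_r -> R) :=
  forall J : {set 'I_r}, exists S : {set 'I_r},
    #|S| = #|J| /\ \sum_(j in J) x j <= \sum_(i in S) a i.

Lemma SIM_domb r (a : 'I_r -> R) (mono : forall i j : 'I_r, (i <= j)%N -> a i <= a j)
  (x : 'I_r -> R) : SIM a x <-> (forall i, 0 <= x i) /\ domb a x.
Proof.
split.
  move=> [x0 xJ]; split => // J.
  exists [set i : 'I_r | (r - #|J| <= i)%N]%SET; split.
    by apply: card_top; rewrite (leq_trans (max_card _)) ?card_ord.
  rewrite (le_trans (xJ J)) //; rewrite le_eqVlt; apply/orP; left; apply/eqP.
  by apply: eq_bigl => i; rewrite inE.
move=> [x0 xd]; split => // J.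
have [S [cS le]] := xd J.
by rewrite (le_trans le) // -cS; apply: topsum.
Qed.


Lemma sum_ub r (U : {set 'I_r}) (f : 'I_r -> R) m :
  (forall t, t \in U -> f t <= m) -> \sum_(t in U) f t <= #|U|%:R * m.
Proof.
move=> h; rewrite mulr_natl -sumr_const; exact: ler_sum.
Qed.

Lemma sum_lb r (U : {set 'I_r}) (f : 'I_r -> R) m :
  (forall t, t \in U -> m <= f t) -> #|U|%:R * m <= \sum_(t in U) f t.
Proof.
move=> h; rewrite mulr_natl -sumr_const; exact: ler_sum.
Qed.

Lemma sumD1 r (A : {set 'I_r}) t (F : 'I_r -> R) :
  t \in A -> \sum_(i in A) F i = F t + \sum_(i in A :\ t) F i.
Proof. by move=> tA; rewrite (big_setD1 t). Qed.

Lemma sumU1 r (A : {set 'I_r}) t (F : 'I_r -> R) :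
  t \notin A -> \sum_(i in t |: A) F i = F t + \sum_(i in A) F i.
Proof. by move=> tA; rewrite big_setU1. Qed.

Lemma domb_drop n (a x : 'I_n.+1 -> R) (j M k : 'I_n.+1) (m c : R) :
  domb a x -> x j = m -> (forall i, x i <= m) -> m <= a M ->
  k != M -> a k <= m -> (forall i, i != M -> a i <= m -> a i <= a k) ->
  c = a k + a M - m ->
  domb (fun i : 'I_n => if lift M i == k then c else a (lift M i))
       (fun i => x (lift j i)).
Proof.
move=> xd xj xm mM kM akm kmax cE J.
set J1 := lift j @: J.
have jJ1 : j \notin J1.
  apply/negP => /imsetP [i _ /eqP]; by rewrite (negbTE (neq_lift _ _)).
have cJ1 : #|J1| = #|J| by rewrite card_imset //; exact: lift_inj.
have sJ : \sum_(i in J) x (lift j i) = \sum_(t in J1) x t.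
  by rewrite big_imset //; move=> i1 i2 _ _; exact: lift_inj.
have [T [cT hT]] := xd (j |: J1).
rewrite sumU1 // xj cardsU1 jJ1 cJ1 /= in hT cT.
set b2 := fun t => if t == k then c else a t.
have b2ge : forall t, a t <= b2 t.
  by move=> t; rewrite /b2; case: eqP => [->|_] //; rewrite cE; lra.
have bnd : \sum_(t in J1) x t <= #|J|%:R * m.
  by rewrite -cJ1; apply: sum_ub => t _; apply: xm.
have lbU : forall U : {set 'I_n.+1}, (forall t, t \in U -> m <= a t) ->
    #|U|%:R * m <= \sum_(t in U) b2 t.
  move=> U hU; apply: (le_trans (sum_lb hU)); apply: ler_sum => t _; exact: b2ge.
suff [U [MU [cU hU]]] : exists U : {set 'I_n.+1}, M \notin U /\ #|U| = #|J| /\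
    \sum_(t in J1) x t <= \sum_(t in U) b2 t.
  have [c1 s1] := pull_lift b2 MU.
  exists [set i | lift M i \in U]%SET; split; first by rewrite c1.
  by rewrite sJ (le_trans hU) // -s1.
have hT' : \sum_(t in J1) x t <= \sum_(i in T) a i - m by lra.
case: (boolP (M \in T)) => MT.
  set T' := T :\ M.
  have MT' : M \notin T' by rewrite setD11.
  have cT' : #|T'| = #|J|.
    by move: cT; rewrite (cardsD1 M T) MT add1n => -[].
  have sT : \sum_(i in T) a i = a M + \sum_(i in T') a i by rewrite (sumD1 _ MT).
  case: (boolP (k \in T')) => kT'.
    exists T'; split=> //; split=> //.
    rewrite [X in _ <= X](sumD1 _ kT') /b2 eqxx.
    rewrite [X in _ <= _ + X](eq_bigr a); last first.
      by move=> i; rewrite !inE => /andP [/negbTE -> _].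
    move: hT'; rewrite sT (sumD1 _ kT') cE; lra.
  case: (pickP [pred t | (t \in T') && (a t <= a k)]) => [t /andP [tT' atk]|nop].
    exists (k |: (T' :\ t)); split.
      by rewrite !inE eqxx andbF orbF eq_sym.
    split.
      rewrite cardsU1 in_setD1 (negbTE kT') andbF /=.
      by move: cT'; rewrite (cardsD1 t T') tT' add1n => ->.
    rewrite sumU1 /=; last by rewrite in_setD1 (negbTE kT') andbF.
    rewrite /b2 eqxx.
    rewrite [X in _ <= _ + X](eq_bigr a); last first.
      move=> i; rewrite in_setD1 => /andP [_ iT']; case: eqP => // ik.
      by move: kT'; rewrite -ik iT'.
    move: hT'; rewrite sT (sumD1 _ tT') cE; lra.
  exists T'; split=> //; split=> //.
  apply: (le_trans bnd); rewrite -cT'; apply: lbU => t tT'.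
  rewrite leNgt; apply/negP => atm.
  have tM : t != M by move: tT'; rewrite !inE => /andP [].
  have := nop t; rewrite /= tT' (kmax t tM (ltW atm)) //.
case: (pickP [pred t | (t \in T) && (a t <= m)]) => [t /andP [tT atm]|nop].
  exists (T :\ t); split; first by rewrite !inE negb_and MT orbT.
  split; first by move: cT; rewrite (cardsD1 t T) tT add1n => -[].
  apply: (le_trans hT'); rewrite (sumD1 _ tT).
  have : \sum_(i in T :\ t) a i <= \sum_(i in T :\ t) b2 i.
    by apply: ler_sum => i _; apply: b2ge.
  lra.
have : (0 < #|T|)%N by rewrite cT.
rewrite card_gt0 => /set0Pn [t0 t0T].
exists (T :\ t0); split; first by rewrite !inE negb_and MT orbT.
split; first by move: cT; rewrite (cardsD1 t0 T) t0T add1n => -[].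
apply: (le_trans bnd).
have -> : #|J| = #|T :\ t0| by move: cT; rewrite (cardsD1 t0 T) t0T add1n => -[].
apply: lbU => t; rewrite !inE => /andP [_ tT].
rewrite leNgt; apply/negP => atm.
by have := nop t; rewrite /= tT (ltW atm).
Qed.


Lemma exists_max_cond (I : finType) (P : pred I) (f : I -> R) i0 :
  P i0 -> exists j, P j /\ forall i, P i -> f i <= f j.
Proof.
move=> Pi0; case: (arg_maxP f Pi0) => j Pj h; exists j; split=> // i Pi; exact: h.
Qed.

Lemma exists_max n (f : 'I_n.+1 -> R) : exists j, forall i, f i <= f j.
Proof.
have [j [_ h]] := @exists_max_cond _ xpredT f ord0 isT.
by exists j => i; apply: h.
Qed.

Lemma conv_pt r (S : set ('I_r -> R)) p : S p -> conv_hull S p.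
Proof.
move=> Sp; exists 1%N, (fun _ => 1), (fun _ => p); split.
- by move=> _; exact: ler01.
- by rewrite big_ord1.
- by [].
- by move=> i; rewrite big_ord1 mul1r.
Qed.

Lemma hull_ind n : forall (a x : 'I_n -> R), domb a x ->
  exists2 y, conv_hull [set (fun i => a (s i)) | s in [set: 'S_n]] y &
    forall i, x i <= y i.
Proof.
elim: n => [|n IH] a x xd.
  exists (fun i => a ((1 : 'S_0)%g i)); last by case.
  by apply: conv_pt; exists 1%g.
have [j jmax] := exists_max x.
set m := x j.
have [M Mmax] := exists_max a.
have mM : m <= a M.
  have [S [cS h]] := xd [set j]%SET.
  move: cS; rewrite cards1 => /eqP /cards1P [s Se].
  by move: h; rewrite Se !big_set1 => h; apply: (le_trans h).
case: (pickP [pred k | (k != M) && (a k <= m)]) => [k0 Pk0|nop]; last first.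
  exists (fun i => a ((1 : 'S_n.+1)%g i)); first by apply: conv_pt; exists 1%g.
  move=> i; rewrite perm1.
  case: (eqVneq i M) => [->|iM]; first exact: le_trans (jmax M) mM.
  have := nop i; rewrite /= iM /= => /negbT; rewrite -ltNge => mi.
  exact: le_trans (jmax i) (ltW mi).
have [k [/andP [kM akm] kmax0]] := exists_max_cond a Pk0.
have kmax : forall i, i != M -> a i <= m -> a i <= a k.
  by move=> i iM aim; apply: kmax0; rewrite /= iM aim.
set c := a k + a M - m.
have xd' := domb_drop xd (erefl m) jmax mM kM akm kmax (erefl c).
have [y' [mm [w [p [w0 w1 pS pE]]]] xy'] := IH _ _ xd'.
have [l [l0 [l1 mE]]] : exists l, 0 <= l /\ l <= 1 /\ m = l * a M + (1 - l) * a k.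
  case: (eqVneq (a M) (a k)) => e.
    exists 1; split; first exact: ler01.
    split=> //; rewrite e; lra.
  have pos : 0 < a M - a k.
    by rewrite subr_gt0 lt_neqAle eq_sym e /= (le_trans akm mM).
  exists ((m - a k) / (a M - a k)); split.
    by apply: divr_ge0; lra.
  split.
    by rewrite ler_pdivrMr // mul1r; lra.
  by field; rewrite subr_eq0 e.
have /choice [sig sigE] : forall q, exists s : 'S_n,
    p q = (fun i => if lift M (s i) == k then c else a (lift M (s i))).
  by move=> q; have [s _ e] := pS q; exists s; rewrite -e.
pose y := fun i => if unlift j i is Some i' then y' i' else m.
exists y; last first.
  move=> i; case: (unliftP j i) => [i'|] ->; rewrite /y ?liftK ?unlift_none //.
pose F := fun q (b : bool) => if b then w q * l else w q * (1 - l).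
pose P := fun q (b : bool) => if b then (fun i => a (lift_perm j M (sig q) i))
   else (fun i => a ((lift_perm j M (sig q) * tperm k M)%g i)).
apply: (@conv_fin _ _ ('I_mm * bool)%type (fun u => F u.1 u.2) (fun u => P u.1 u.2)).
- by case=> q [] /=; rewrite /F; apply: mulr_ge0 => //; lra.
- rewrite -(pair_bigA _ F) /= -w1; apply: eq_bigr => q _.
  rewrite big_bool /F /=; ring.
- case=> q [] /=; rewrite /P.
    by exists (lift_perm j M (sig q)).
  by exists (lift_perm j M (sig q) * tperm k M)%g.
move=> i; rewrite -(pair_bigA _ (fun q b => F q b * P q b i)) /=.
case: (unliftP j i) => [i'|] ->.
  rewrite /y liftK pE; apply: eq_bigr => q _.
  rewrite big_bool /F /P /= sigE permM !lift_perm_lift.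
  case: eqP => [e|ne].
    by rewrite e tpermL /c mE; ring.
  rewrite tpermD; first ring.
    by apply/eqP => e; apply: ne; rewrite e.
  by rewrite neq_lift.
rewrite /y unlift_none.
rewrite (eq_bigr (fun q => w q * m)); first by rewrite -mulr_suml w1 mul1r.
move=> q _; rewrite big_bool /F /P /= permM !lift_perm_id tpermR mE; ring.
Qed.


Lemma part2 n (a : 'I_n.+1 -> R)
  (mono : forall i j : 'I_n.+1, (i <= j)%N -> a i <= a j) :
  SIM a = down_closure (conv_hull [set (fun i => a (s i)) | s in [set: 'S_n.+1]]).
Proof.
apply/seteqP; split => x.
  move=> /(SIM_domb mono) [x0 xd]; split => //.
  by have [y hy xy] := hull_ind xd; exists y.
move=> [x0 [y [mm [w [p [w0 w1 pS pE]]]] xy]]; split => // J.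
apply: (le_trans (ler_sum _ (fun i _ => xy i))).
rewrite (eq_bigr _ (fun i _ => pE i)) exchange_big /=.
set top := \sum_(i < n.+1 | _) a i.
apply: (@le_trans _ _ (\sum_(q < mm) w q * top)); last first.
  by rewrite -mulr_suml w1 mul1r.
apply: ler_sum => q _; rewrite -mulr_sumr; apply: ler_wpM2l => //.
have [s _ <-] := pS q.
rewrite -(big_imset (fun i => a i) (in2W (@perm_inj _ s))).
rewrite /top -(card_imset J (@perm_inj _ s)); exact: topsum.
Qed.

Definition ins n (j : 'I_n.+1) (v : R) (y : 'I_n -> R) : 'I_n.+1 -> R :=
  fun i => if unlift j i is Some i' then y i' else v.

Lemma drop_ins n (j : 'I_n.+1) v y : drop_coord j (ins j v y) = y.
Proof. by apply/funext => i; rewrite /drop_coord /ins liftK. Qed.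

Lemma ins_j n (j : 'I_n.+1) v y : ins j v y j = v.
Proof. by rewrite /ins unlift_none. Qed.

Lemma sum_ins n (j : 'I_n.+1) v (y : 'I_n -> R) (J : {set 'I_n.+1}) :
  \sum_(i in J) ins j v y i =
    (if j \in J then v else 0) + \sum_(i in [set i | lift j i \in J]%SET) y i
  /\ #|J| = ((j \in J) + #|[set i | lift j i \in J]%SET|)%N.
Proof.
have e : [set i | lift j i \in J]%SET = [set i | lift j i \in J :\ j]%SET.
  by apply/setP => i; rewrite !inE eq_sym neq_lift.
have jJ : j \notin J :\ j by rewrite setD11.
have [c s] := pull_lift (ins j v y) jJ.
have s' : \sum_(i in [set i | lift j i \in J]%SET) y i = \sum_(i in J :\ j) ins j v y i.
  by rewrite -s -e; apply: eq_bigr => i _; rewrite /ins liftK.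
rewrite s' e c.
case: (boolP (j \in J)) => jin.
  by rewrite (sumD1 _ jin) ins_j (cardsD1 j J) jin.
have -> : J :\ j = J.
  apply/setP => i; rewrite !inE; case: eqP => // ->; by rewrite (negbTE jin).
by rewrite add0r.
Qed.

Lemma sum_drop n (j : 'I_n.+1) (x : 'I_n.+1 -> R) (J : {set 'I_n}) :
  \sum_(i in J) drop_coord j x i = \sum_(t in lift j @: J) x t /\
  #|lift j @: J| = #|J| /\ j \notin lift j @: J.
Proof.
split; first by rewrite big_imset //; move=> i1 i2 _ _; exact: lift_inj.
split; first by rewrite card_imset //; exact: lift_inj.
apply/negP => /imsetP [i _ /eqP]; by rewrite (negbTE (neq_lift _ _)).
Qed.

Lemma topshift0 n s (F : 'I_n.+1 -> R) : (s <= n)%N ->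
  \sum_(i < n.+1 | (n.+1 - s <= i)%N) F i =
  \sum_(i < n | (n - s <= i)%N) F (lift ord0 i).
Proof.
move=> sn; rewrite big_mkcond big_ord_recl /= [in RHS]big_mkcond.
have -> : (n.+1 - s <= 0)%N = false by apply/negbTE; rewrite -ltnNge subn_gt0 ltnS.
rewrite add0r; apply: eq_bigr => i _; rewrite /bump /= add1n subSn // ltnS.
Qed.

Lemma topshiftmax n s (F : 'I_n.+1 -> R) : (s <= n)%N ->
  \sum_(i < n.+1 | (n.+1 - s.+1 <= i)%N) F i =
  \sum_(i < n | (n - s <= i)%N) F (widen_ord (leqnSn n) i) + F ord_max.
Proof.
move=> sn; rewrite big_mkcond big_ord_recr /= [in RHS]big_mkcond subSS.
by rewrite leq_subr.
Qed.

Lemma top_mono r (a : 'I_r -> R) (a0 : forall i, 0 <= a i) s s' : (s' <= s)%N ->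
  \sum_(i < r | (r - s' <= i)%N) a i <= \sum_(i < r | (r - s <= i)%N) a i.
Proof.
move=> ss; rewrite [X in X <= _]big_mkcond [X in _ <= X]big_mkcond.
apply: ler_sum => i _; case: ifP => h1; case: ifP => h2 //.
by move: h2; rewrite (leq_trans _ h1) // leq_sub2l.
Qed.


Lemma part4 n (a : 'I_n.+1 -> R) (a0 : forall i, 0 <= a i) (j : 'I_n.+1) :
  proj_out j (SIM a) = SIM (fun i : 'I_n => a (lift ord0 i)).
Proof.
have cn : forall J : {set 'I_n}, (#|J| <= n)%N.
  by move=> J; rewrite (leq_trans (max_card _)) ?card_ord.
apply/seteqP; split => y.
  move=> [x [x0 xJ] <-]; split; first by move=> i; apply: x0.
  move=> J; have [s [c jn]] := sum_drop j x J.
  by rewrite s (le_trans (xJ _)) // c topshift0.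
move=> [y0 yJ]; exists (ins j 0 y); last exact: drop_ins.
split; first by move=> i; rewrite /ins; case: unlift.
move=> J; have [s c] := sum_ins j 0 y J; rewrite s if_same add0r.
apply: (le_trans (yJ _)); rewrite -topshift0 //; apply: top_mono => //.
by rewrite c leq_addl.
Qed.

Lemma topwiden n (a : 'I_n.+1 -> R)
  (mono : forall i j : 'I_n.+1, (i <= j)%N -> a i <= a j) s : (s <= n)%N ->
  \sum_(i < n | (n - s <= i)%N) a (widen_ord (leqnSn n) i) <=
  \sum_(i < n.+1 | (n.+1 - s <= i)%N) a i.
Proof.
move=> sn; set S := [set i : 'I_n | (n - s <= i)%N]%SET.
have cS : #|S| = s by apply: card_top.
have winj : injective (widen_ord (leqnSn n)).
  by move=> i1 i2 /(congr1 val) /= /val_inj.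
have -> : \sum_(i < n | (n - s <= i)%N) a (widen_ord (leqnSn n) i) =
   \sum_(t in widen_ord (leqnSn n) @: S) a t.
  rewrite big_imset /=; last by move=> i1 i2 _ _; exact: winj.
  by apply: eq_bigl => i; rewrite inE.
apply: (le_trans (topsum mono _)); rewrite card_imset // cS. exact: le_refl.
Qed.

Lemma part3 n (a : 'I_n.+1 -> R)
  (mono : forall i j : 'I_n.+1, (i <= j)%N -> a i <= a j)
  (a0 : forall i, 0 <= a i) (j : 'I_n.+1) :
  [set drop_coord j x | x in [set x | SIM a x /\ x j = a ord_max]]
  = SIM (fun i : 'I_n => a (widen_ord (leqnSn n) i)).
Proof.
have cn : forall J : {set 'I_n}, (#|J| <= n)%N.
  by move=> J; rewrite (leq_trans (max_card _)) ?card_ord.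
apply/seteqP; split => y.
  move=> [x [[x0 xJ] xj] <-]; split; first by move=> i; apply: x0.
  move=> J; have [s [c jn]] := sum_drop j x J.
  have := xJ (j |: lift j @: J).
  rewrite sumU1 // cardsU1 jn c xj /= add1n topshiftmax // s; lra.
move=> [y0 yJ]; exists (ins j (a ord_max) y); last exact: drop_ins.
split; last exact: ins_j.
split; first by move=> i; rewrite /ins; case: unlift.
move=> J; have [s c] := sum_ins j (a ord_max) y J; rewrite s.
have h := yJ [set i | lift j i \in J]%SET.
case: (boolP (j \in J)) => jJ; rewrite c ?jJ ?(negbTE jJ).
  by rewrite add1n topshiftmax //; lra.
rewrite add0n add0r; apply: (le_trans h); exact: topwiden.
Qed.

End Comb.

Section M.
Variable R : realType.
Local Notation mu := (@lebesgue_measure R).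

Definition nu (b : R) : {measure set (measurableTypeR R) -> \bar R}.
Proof. refine (pushforward mu ( *%R b : measurableTypeR R -> measurableTypeR R)). exact: mulrl_measurable. Defined.

Lemma leb_scale (b : R) (b0 : 0 < b) (A : set R) : measurable A ->
  (mu (( *%R b) @^-1` A) = (b^-1)%:E * mu A)%E.
Proof.
move=> mA.
have Hint : forall X : set R, ocitv X -> mu X = mscale (NngNum (ltW b0)) (nu b) X.
  move=> X [[x1 x2] _ <-] /=.
  rewrite /mscale /nu /=; rewrite /pushforward /=.
  have -> : ( *%R b) @^-1` `]x1, x2]%classic = `]x1 / b, x2 / b]%classic.
    apply/seteqP; split => t /=; rewrite !in_itv /= => /andP [h1 h2].
      by apply/andP; split; [rewrite ltr_pdivrMr // mulrC | rewrite ler_pdivlMr // mulrC].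
    by apply/andP; split; [rewrite mulrC -ltr_pdivrMr | rewrite mulrC -ler_pdivlMr].
  rewrite !lebesgue_measure_itv /= !lte_fin ltr_pM2r ?invr_gt0 //.
  case: ifP => _; last by rewrite mule0.
  by rewrite -!EFinD -EFinM; congr EFin; field; rewrite gt_eqF.
rewrite [in RHS](lebesgue_measure_unique Hint mA) /mscale /= muleA -EFinM mulVf ?mul1e //.
by rewrite gt_eqF.
Qed.


Import HBNNSimple.

Section hsc.
Variables (h : {nnsfun (measurableTypeR R) >-> R}) (b : R).
Definition hsc : measurableTypeR R -> R := fun t => h (b * t).
Lemma hsc_meas : measurable_fun [set: measurableTypeR R] hsc.
Proof.
apply: (measurableT_comp (f := h) (g := ( *%R b))) => //.
Qed.
HB.instance Definition _ := isMeasurableFun.Build _ _ _ _ hsc hsc_meas.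
Lemma hsc_fin : finite_set (range hsc).
Proof.
apply: (sub_finite_set _ (@fimfunP _ _ h)).
by move=> _ [t _ <-]; exists (b * t).
Qed.
HB.instance Definition _ := @FiniteImage.Build _ R hsc hsc_fin.
Lemma hsc_ge0 : forall t, 0 <= hsc t.
Proof. by move=> t; apply: fun_ge0. Qed.
HB.instance Definition _ := @isNonNegFun.Build _ R hsc hsc_ge0.
End hsc.

Lemma sintegral_hsc (h : {nnsfun (measurableTypeR R) >-> R}) (b : R) : 0 < b ->
  sintegral mu (hsc h b) = ((b^-1)%:E * sintegral mu h)%E.
Proof.
move=> b0; rewrite !sintegralET ge0_mule_fsumr; last first.
  by move=> x; exact: nnsfun_mulemu_ge0.
apply: eq_fsbigr => x _.
have -> : hsc h b @^-1` [set x] = ( *%R b) @^-1` (h @^-1` [set x]) by [].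
rewrite leb_scale //; last first.
  have := @measurable_funPTI _ _ _ _ h [set x] (measurable_set1 x); exact.
by rewrite muleCA.
Qed.


Lemma int_scale (f : R -> \bar R) (c q : R) : 0 < c -> 0 < q ->
  (forall t, (0 <= f t)%E) ->
  (\int[mu]_(t in [set: R]) (c%:E * f (t / q)%R) =
   (c * q)%:E * \int[mu]_(t in [set: R]) f t)%E.
Proof.
move=> c0 q0 f0.
have g0 : forall t, (0 <= c%:E * f (t / q)%R)%E.
  by move=> t; rewrite mule_ge0 // lee_fin ltW.
rewrite !ge0_integralTE //.
have cq0 : (0 <= (c * q)%:E)%E by rewrite lee_fin mulr_ge0 // ltW.
apply/eqP; rewrite eq_le; apply/andP; split.
  apply: ge_ereal_sup => _ [h /= hle <-].
  have ci0 : 0 <= c^-1 by rewrite invr_ge0 ltW.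
  pose h2 := @scale_nnsfun _ _ _ (hsc h q) c^-1 ci0.
  have e : sintegral mu h = ((c * q)%:E * sintegral mu h2)%E.
    rewrite (_ : sintegral mu h2 = sintegral mu (cst c^-1 \* hsc h q)%R) //.
    rewrite sintegralrM sintegral_hsc // !muleA -!EFinM.
    have -> : c * q * c^-1 * q^-1 = 1 by field; rewrite ?gt_eqF.
    by rewrite mul1e.
  rewrite e; apply: lee_wpmul2l => //; apply: ereal_sup_ubound; exists h2 => //.
  move=> t /=; have := hle (q * t); rewrite mulrAC mulfV ?gt_eqF // mul1r => ht.
  rewrite EFinM -(mul1e (f t)) -(mulVf (negbT (gt_eqF c0))) EFinM -muleA.
  by apply: lee_wpmul2l => //; rewrite lee_fin ltW // invr_gt0.
have le1 : (ereal_sup [set sintegral mu h | h in [set h : {nnsfun (measurableTypeR R) >-> R} | forall x, ((h x)%:E <= f x)%E]] <= ((c * q)^-1)%:E * ereal_sup [set sintegral mu h | h in [set h : {nnsfun (measurableTypeR R) >-> R} | forall x, ((h x)%:E <= c%:E * f (x / q)%R)%E]])%E.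
  apply: ge_ereal_sup => _ [h /= hle <-].
  pose h1 := @scale_nnsfun _ _ _ (hsc h q^-1) c (ltW c0).
  have e : sintegral mu h = (((c * q)^-1)%:E * sintegral mu h1)%E.
    rewrite (_ : sintegral mu h1 = sintegral mu (cst c \* hsc h q^-1)%R) //.
    rewrite sintegralrM sintegral_hsc ?invr_gt0 // !muleA -!EFinM invrK.
    have -> : (c * q)^-1 * c * q = 1 by field; rewrite ?gt_eqF.
    by rewrite mul1e.
  rewrite e; apply: lee_wpmul2l; first by rewrite lee_fin invr_ge0 mulr_ge0 // ltW.
  apply: ereal_sup_ubound; exists h1 => //.
  move=> t /=; rewrite EFinM [(t / q)%R]mulrC; apply: lee_wpmul2l; first by rewrite lee_fin ltW.
  exact: hle.
apply: (le_trans (lee_wpmul2l cq0 le1)).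
by rewrite muleA -EFinM mulfV ?mul1e // mulf_neq0 // gt_eqF.
Qed.


Lemma vol_ge0 n (A : set ('I_n -> R)) : (0 <= volume A)%E.
Proof.
elim: n A => [|n IH] A /=; first by case: ifP.
by apply: integral_ge0 => t _; exact: IH.
Qed.

Lemma vol_scale n q (A : set ('I_n -> R)) : 0 < q ->
  volume (scale_set q A) = ((q ^+ n)%:E * volume A)%E.
Proof.
move=> q0; elim: n A => [|n IH] A /=.
  rewrite expr0 mul1e.
  have -> : (scale_set q A !=set0) = (A !=set0).
    rewrite propeqE; split => [[y [x Ax _]]|[x Ax]]; first by exists x.
    by exists (fun i => q * x i); exists x.
  by [].
have E : forall t, (fun y => scale_set q A (cons_coord t y)) =
    scale_set q (fun y => A (cons_coord (t / q) y)).
  move=> t; apply/funext => y; apply/propext; split.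
    case => x Ax xe.
    exists (fun i => x (lift ord0 i)); last first.
      apply/funext => i; have := congr1 (fun g => g (lift ord0 i)) xe.
      by rewrite /cons_coord liftK.
    suff -> : cons_coord (t / q) (fun i => x (lift ord0 i)) = x by [].
    apply/funext => i; case: (unliftP ord0 i) => [i'|] ->;
      rewrite /cons_coord ?liftK ?unlift_none //.
    have := congr1 (fun g => g ord0) xe; rewrite /cons_coord unlift_none /= => <-.
    by field; rewrite gt_eqF.
  case => z Az <-; exists (cons_coord (t / q) z) => //.
  apply/funext => i; case: (unliftP ord0 i) => [i'|] ->;
    rewrite /cons_coord ?liftK ?unlift_none //.
  by field; rewrite gt_eqF.
under eq_integral => t _ do rewrite E IH.
rewrite (int_scale (f := fun s => volume (fun y => A (cons_coord s y)))) //.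
- by rewrite exprSr.
- by rewrite exprn_gt0.
- by move=> s; exact: vol_ge0.
Qed.

End M.

Section Final.
Variable R : realType.

Lemma top1 n (a : 'I_n.+1 -> R) :
  \sum_(i < n.+1 | (n.+1 - 1 <= i)%N) a i = a ord_max.
Proof.
rewrite (@topshiftmax R n 0 a (leq0n n)) big_pred0 ?add0r //.
by move=> i; rewrite subn0 leqNgt ltn_ord.
Qed.

Lemma part1 n (a : 'I_n.+1 -> R)
  (mono : forall i j : 'I_n.+1, (i <= j)%N -> a i <= a j)
  (a0 : forall i, 0 <= a i) (aM : 0 < a ord_max) (j : 'I_n.+1) :
  width_along j (SIM a) = (a ord_max)%:E.
Proof.
rewrite /width_along.
have -> : [set x j | x in SIM a] = `[0, a ord_max]%classic.
  apply/seteqP; split.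
    move=> _ [x [x0 xJ] <-] /=; rewrite in_itv /= x0 /=.
    have := xJ [set j]%SET; rewrite big_set1 cards1 top1; exact.
  move=> y /=; rewrite in_itv /= => /andP [y0 yM].
  exists (ins j y (fun _ => 0)); last exact: ins_j.
  split; first by move=> i; rewrite /ins; case: unlift.
  move=> J; have [s c] := sum_ins j y (fun _ => 0) J; rewrite s big1 // addr0.
  case: ifP => jJ; last by apply: sumr_ge0 => i _.
  apply: (le_trans yM); rewrite -top1; apply: top_mono => //.
  by rewrite card_gt0; apply/set0Pn; exists j.
rewrite lebesgue_measure_itv /= lte_fin aM.
by rewrite -EFinB subr0.
Qed.

Lemma proj_scale n (j : 'I_n.+1) (q : R) (A : set ('I_n.+1 -> R)) :
  proj_out j (scale_set q A) = scale_set q (proj_out j A).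
Proof.
apply/seteqP; split => y.
  by case=> _ [x Ax <-] <-; exists (drop_coord j x) => //; exists x.
by case=> _ [x Ax <-] <-; exists (fun i => q * x i) => //; exists x.
Qed.

Lemma distr_fin (r v k s : R) :
  (r%:E * (v%:E - k%:E * s%:E) = r%:E * v%:E - (r * k)%:E * s%:E)%E.
Proof. rewrite -!EFinM -EFinB; congr EFin; ring. Qed.

Lemma distr_aux (r k : R) (V S : \bar R) : 0 < r -> 0 < k ->
  (0 <= V)%E -> (0 <= S)%E ->
  (r%:E * (V - k%:E * S) = r%:E * V - (r * k)%:E * S)%E.
Proof.
move=> r0 k0; case: V => [v| |] //; case: S => [s| |] // _ _.
- exact: distr_fin.
- rewrite !gt0_muley ?lte_fin ?mulr_gt0 //= !addeNy gt0_muleNy //.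
- rewrite gt0_muley ?lte_fin //= !addye //.
- rewrite !gt0_muley ?lte_fin ?mulr_gt0 //= addeNy gt0_muleNy //.
Qed.

Lemma part5 n (a : 'I_n.+1 -> R) (q k : R) : 0 < q -> 0 < k ->
  (delta (q * k)%R (scale_set q (SIM a)) = ((q ^+ n.+1)%R)%:E * delta k (SIM a))%E.
Proof.
move=> q0 k0; rewrite /delta vol_scale //.
under eq_bigr => j _ do rewrite proj_scale vol_scale //.
rewrite -ge0_sume_distrr; last by move=> j _; exact: vol_ge0.
rewrite distr_aux ?exprn_gt0 //; last 2 first.
- exact: vol_ge0.
- by apply: sume_ge0 => j _; exact: vol_ge0.
by rewrite muleA -EFinM; congr (_ - _ * _)%E; congr EFin; rewrite exprS; ring.
Qed.

End Final.

Theorem lemma13 (R : realType) (n : nat) (a : 'I_n.+1 -> R)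
  (a_pos : 0 < a ord0)
  (a_mono : forall i j : 'I_n.+1, (i <= j)%N -> a i <= a j) :
  [/\ (* (1) width *)
      (forall j : 'I_n.+1, width_along j (SIM a) = (a ord_max)%:E),
      (* (2) downwards closure of conv hull of coordinate permutations *)
      SIM a = down_closure (conv_hull [set (fun i => a (s i)) | s in [set: 'S_n.+1]]),
      (* (3) slices at x_j = alpha_r *)
      (forall j : 'I_n.+1,
         [set drop_coord j x | x in [set x | SIM a x /\ x j = a ord_max]]
         = SIM (fun i : 'I_n => a (widen_ord (leqnSn n) i))),
      (* (4) projections *)
      (forall j : 'I_n.+1,
         proj_out j (SIM a) = SIM (fun i : 'I_n => a (lift ord0 i))) &
      (* (5) scaling of delta *)
      (forall q k : R, 0 < q -> 0 < k ->
         (delta (q * k)%R (scale_set q (SIM a)) = ((q ^+ n.+1)%R)%:E * delta k (SIM a))%E)].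
Proof.
have a0 : forall i, 0 <= a i.
  by move=> i; exact: (le_trans (ltW a_pos) (a_mono ord0 i (leq0n _))).
have aM : 0 < a ord_max by exact: (lt_le_trans a_pos (a_mono ord0 ord_max (leq0n _))).
split.
- by move=> j; apply: part1.
- exact: part2.
- by move=> j; apply: part3.
- by move=> j; apply: part4.
- by move=> q k q0 k0; apply: part5.
Qed.
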